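(* Let $X$ be a Banach space satisfying at least one of the following: (a) $n(X)=1$; (b) $n(X)>0$ and $X$ has the approximation property; (c) $X$ is finite dimensional. Then $X$ has the BPBop-nu if and only if $X$ is one-dimensional.
   Context: Let $X$ be a Banach space over $\mathbb{K}\in\{\mathbb{R},\mathbb{C}\}$, $\mathcal{L}(X)$ the bounded linear operators on $X$ with operator norm. $\Pi(X)=\{(x,x^* )\in S_X\times S_{X^*}: x^*(x)=1\}$; $v(T)=\sup\{|x^*(Tx)|:(x,x^* )\in\Pi(X)\}$; $n(X)=\inf\{v(T): T\in\mathcal{L}(X),\ \|T\|=1\}$. $X$ has the BPBop-nu if for every $\varepsilon>0$ there is $\eta(\varepsilon)>0$ such that whenever $T\in\mathcal{L}(X)$ with $v(T)=1$ and $(x,x^* )\in\Pi(X)$ satisfy $|x^*(Tx)|>1-\eta(\varepsilon)$, there is $(y,y^* )\in\Pi(X)$ with $|y^*(Ty)|=1$, $\|y-x\|<\varepsilon$ and $\|y^*-x^*\|<\varepsilon$. *)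

(* Defs.v *)
From mathcomp Require Import all_boot all_order all_algebra.
From mathcomp Require Import all_classical all_reals all_analysis.
From mathcomp Require Import complex.
Set Implicit Arguments. Unset Strict Implicit. Unset Printing Implicit Defensive.
Import Order.TTheory GRing.Theory Num.Theory.
Import numFieldNormedType.Exports.
Local Open Scope classical_set_scope.
Local Open Scope ring_scope.

Section BanachDefs.
Variable K : numFieldType.

Definition is_sup (A : set K) (s : K) : Prop :=
  (forall a, A a -> a <= s) /\ (forall c, (forall a, A a -> a <= c) -> s <= c).
Definition is_inf (A : set K) (s : K) : Prop :=
  (forall a, A a -> s <= a) /\ (forall c, (forall a, A a -> c <= a) -> c <= s).

Variable X : normedModType K.

Definition is_linear_op (T : X -> X) : Prop :=
  forall (a : K) (x y : X), T (a *: x + y) = a *: T x + T y.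
Definition bounded_op (T : X -> X) : Prop := is_linear_op T /\ continuous T.

Definition is_linear_fun (f : X -> K) : Prop :=
  forall (a : K) (x y : X), f (a *: x + y) = a * f x + f y.
Definition dual_elt (f : X -> K) : Prop := is_linear_fun f /\ continuous f.

Definition op_norm (T : X -> X) (c : K) : Prop :=
  is_sup [set `|T x| | x in [set x : X | `|x| <= 1]] c.
Definition dual_norm (f : X -> K) (c : K) : Prop :=
  is_sup [set `|f x| | x in [set x : X | `|x| <= 1]] c.

Definition Pi (x : X) (f : X -> K) : Prop :=
  `|x| = 1 /\ dual_elt f /\ dual_norm f 1 /\ f x = 1.

Definition num_radius (T : X -> X) (s : K) : Prop :=
  is_sup [set a | exists x f, Pi x f /\ a = `|f (T x)| ] s.

Definition num_index (s : K) : Prop :=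
  is_inf [set a | exists T, bounded_op T /\ op_norm T 1 /\ num_radius T a] s.

Definition BPBop_nu : Prop :=
  forall eps : K, 0 < eps -> exists eta : K, 0 < eta /\
    forall T : X -> X, bounded_op T -> num_radius T 1 ->
    forall (x : X) (f : X -> K), Pi x f -> 1 - eta < `|f (T x)| ->
    exists (y : X) (g : X -> K), Pi y g /\ `|g (T y)| = 1 /\
      `|y - x| < eps /\
      exists c, dual_norm (fun z => g z - f z) c /\ c < eps.

Definition in_span (s : seq X) (y : X) : Prop :=
  exists c : 'I_(size s) -> K, y = \sum_(i < size s) c i *: s`_i.

Definition finite_dim : Prop :=
  exists s : seq X, forall y : X, in_span s y.

Definition one_dim : Prop :=
  exists e : X, e != 0 /\ forall y : X, exists a : K, y = a *: e.

Definition finite_rank (T : X -> X) : Prop :=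
  exists s : seq X, forall x : X, in_span s (T x).

Definition approx_prop : Prop :=
  forall (C : set X) (eps : K), compact C -> 0 < eps ->
    exists T : X -> X, bounded_op T /\ finite_rank T /\
      forall x, C x -> `|T x - x| < eps.

End BanachDefs.

Definition theorem2p4_stmt (K : numFieldType) (X : completeNormedModType K)
  : Prop :=
  (exists x : X, x != 0) ->
  (num_index X 1
   \/ ((exists s : K, num_index X s /\ 0 < s) /\ approx_prop X)
   \/ finite_dim X) ->
  (BPBop_nu X <-> one_dim X).

(* Main.v *)
Require Import Defs.
From mathcomp Require Import all_boot all_order all_algebra.
From mathcomp Require Import all_classical all_reals all_analysis.
From mathcomp Require Import complex.
From mathcomp Require Import ring lra.
Set Implicit Arguments. Unset Strict Implicit. Unset Printing Implicit Defensive.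
Import Order.TTheory GRing.Theory Num.Theory.
Import numFieldNormedType.Exports.
Local Open Scope ring_scope.
Local Open Scope classical_set_scope.

Lemma lip_cont (K : numFieldType) (V W : normedModType K) (F : V -> W) (L : K) :
  0 < L -> (forall u w, `|F u - F w| <= L * `|u - w|) -> continuous F.
Proof.
move=> L0 HL x; apply/cvgrPdist_lt => e e0.
apply/nbhs_normP; exists (e / L); first by rewrite /= divr_gt0.
move=> y /= hy.
apply: (le_lt_trans (HL _ _)).
by rewrite -ltr_pdivlMl // mulrC.
Qed.

Section Gen.
Variable K : numFieldType.
Variable X : normedModType K.

Lemma linf0 (f : X -> K) : is_linear_fun f -> f 0 = 0.
Proof.
move=> H; have := H 1 0 0; rewrite scale1r addr0 mul1r => /eqP.
by rewrite -subr_eq subrr eq_sym => /eqP.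
Qed.

Lemma linfZ (f : X -> K) : is_linear_fun f -> forall a x, f (a *: x) = a * f x.
Proof. by move=> H a x; have := H a x 0; rewrite addr0 linf0 // addr0. Qed.

Lemma linfD (f : X -> K) : is_linear_fun f -> forall x y, f (x + y) = f x + f y.
Proof. by move=> H x y; have := H 1 x y; rewrite scale1r mul1r. Qed.

Lemma linfB (f : X -> K) : is_linear_fun f -> forall x y, f (x - y) = f x - f y.
Proof.
move=> H x y; have := H (-1) y x; rewrite scaleN1r mulN1r addrC => ->.
by rewrite addrC.
Qed.

Lemma lino0 (T : X -> X) : is_linear_op T -> T 0 = 0.
Proof.
move=> H; have := H 1 0 0; rewrite !scale1r addr0 => /eqP.
by rewrite -subr_eq subrr eq_sym => /eqP.
Qed.

Lemma linoZ (T : X -> X) : is_linear_op T -> forall a x, T (a *: x) = a *: T x.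
Proof. by move=> H a x; have := H a x 0; rewrite addr0 lino0 // addr0. Qed.

Lemma linoB (T : X -> X) : is_linear_op T -> forall x y, T (x - y) = T x - T y.
Proof.
move=> H x y; have := H (-1) y x; rewrite !scaleN1r addrC => ->.
by rewrite addrC.
Qed.

Lemma dual_bound (h : X -> K) c :
  (forall a x, h (a *: x) = a * h x) -> dual_norm h c ->
  forall u, `|h u| <= c * `|u|.
Proof.
move=> hZ [ub _] u.
have [->|u0] := eqVneq u 0.
  have := hZ 0 0; rewrite scale0r mul0r => ->.
  by rewrite normr0 normr0 mulr0.
have nu0 : 0 < `|u| by rewrite normr_gt0.
set u' := `|u|^-1 *: u.
have nu' : `|u'| = 1.
  by rewrite normrZ normfV normr_id mulVf // gt_eqF.
have hu : u = `|u| *: u' by rewrite /u' scalerA mulfV ?gt_eqF // scale1r.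
have : `|h u'| <= c by apply: ub; exists u' => //=; rewrite nu'.
move=> H; have E : h u = `|u| * h u' by rewrite {1}hu hZ.
by rewrite E normrM normr_id mulrC ler_wpM2r // ltW.
Qed.

Lemma Pi_bound (x : X) (f : X -> K) : Pi x f -> forall u, `|f u| <= `|u|.
Proof.
move=> [_ [[lf _] [dn _]]] u.
have := dual_bound (linfZ lf) dn u; by rewrite mul1r.
Qed.


Lemma lin_comb_op (al be : K) (phi : X -> K) (z : X) : is_linear_fun phi ->
  is_linear_op (fun y => al *: y + (be * phi y) *: z).
Proof.
move=> lphi a x y; rewrite lphi mulrDr scalerDl !scalerDr !scalerA.
by rewrite (mulrC al a) (mulrCA be a) addrACA.
Qed.

Definition sup_ex := forall S : set K, (exists a, S a) ->
  (forall a, S a -> 0 <= a <= 1) -> exists s, is_sup S s.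

Lemma contra_main (Hs : sup_ex) : BPBop_nu X ->
  forall (x0 : X) (f0 : X -> K) (z : X) (phi : X -> K) (y1 : X) (g1 : X -> K) (d : K),
  Pi x0 f0 -> `|z| = 1 -> f0 z = 0 -> is_linear_fun phi ->
  (forall u, `|phi u| <= `|u|) -> Pi y1 g1 -> 0 < d -> d < `|phi y1 * g1 z| -> False.
Proof.
move=> HB x0 f0 z phi y1 g1 d Px0 nz f0z lphi bphi Py1 d0 dw.
have [w1 w1E] : exists w, w = phi y1 * g1 z by eexists.
rewrite -w1E in dw.
have nw0 : 0 < `|w1| by apply: lt_trans dw.
have w0 : w1 != 0 by rewrite -normr_gt0.
set lam := `|w1| / w1.
have nlam : `|lam| = 1 by rewrite normrM normfV normr_id mulfV // gt_eqF.
have lamw : lam * w1 = `|w1| by rewrite /lam mulfVK.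
clearbody lam.
have [eta [eta0 HBP]] := HB d d0.
set e := eta / (eta + 2).
have e2 : 0 < eta + 2 by rewrite addr_gt0.
have e0 : 0 < e by rewrite divr_gt0.
have elt : e < eta.
  rewrite /e ltr_pdivrMr // ltr_pMr //.
  apply: (@lt_le_trans _ _ 2); first by rewrite ltr1n.
  by rewrite ler_wpDl // ltW.
have e1 : e < 1 by rewrite /e ltr_pdivrMr // mul1r ltrDl.
have e1p : 0 < 1 - e by rewrite subr_gt0.
clearbody e.
set c := e * lam.
pose T0 := fun y : X => (1 - e) *: y + (c * phi y) *: z.
have lT0 : is_linear_op T0.
  exact: lin_comb_op.
have T0B : forall u w, T0 u - T0 w = T0 (u - w) by move=> u w; rewrite linoB.
have phi0 : phi 0 = 0 by apply: linf0.
have bT0 : forall u, `|T0 u| <= `|u|.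
  move=> u; rewrite /T0; apply: (le_trans (ler_normD _ _)).
  rewrite !normrZ nz mulr1 /c nlam mulr1 (ger0_norm (ltW e1p)).
  rewrite (ger0_norm (ltW e0)).
  apply: (@le_trans _ _ ((1 - e) * `|u| + e * `|u|)).
    by rewrite lerD2l ler_wpM2l // ltW.
  by rewrite -mulrDl subrK mul1r.
have cT0 : continuous T0.
  apply: (@lip_cont _ _ _ _ 1 ltr01) => u w; rewrite mul1r T0B; exact: bT0.
have gT0 : forall y g, Pi y g -> g (T0 y) = (1 - e) + c * phi y * g z.
  move=> y g [_ [[lg _] [_ gy]]].
  by rewrite /T0 linfD // !linfZ // gy mulr1.
have bnd : forall y g, Pi y g -> `|g (T0 y)| <= (1 - e) + e * `|g z|.
  move=> y g Pyg; rewrite gT0 //.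
  apply: (le_trans (ler_normD _ _)); rewrite (ger0_norm (ltW e1p)) lerD2l.
  rewrite /c !normrM nlam mulr1 (ger0_norm (ltW e0)) -mulrA; apply: ler_wpM2l; first exact: ltW.
  rewrite -[X in _ <= X]mul1r ler_wpM2r //; have := bphi y.
  by case: Pyg => -> _.
have gz1 : forall y g, Pi y g -> `|g z| <= 1.
  by move=> y g Pyg; rewrite -nz; apply: Pi_bound Pyg _.
have bnd1 : forall y g, Pi y g -> `|g (T0 y)| <= 1.
  move=> y g Pyg; apply: (le_trans (bnd _ _ Pyg)).
  rewrite -[X in _ <= X](subrK e) lerD2l -[X in _ <= X]mulr1; apply: ler_wpM2l; first exact: ltW.
  exact: gz1 Pyg.
have v1 : g1 (T0 y1) = (1 - e) + e * `|w1|.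
  by rewrite gT0 // /c -!mulrA -w1E lamw.
have v1p : 0 < (1 - e) + e * `|w1| by rewrite ltr_wpDr // mulr_ge0 // ltW.
set S0 := [set a | exists x f, Pi x f /\ a = `|f (T0 x)|].
have [v [ubv lubv]] : exists v, is_sup S0 v.
  apply: Hs; first by exists `|g1 (T0 y1)|, y1, g1.
  by move=> a [x [f [Pxf ->]]]; rewrite normr_ge0 /=; apply: bnd1 Pxf.
have vge : (1 - e) + e * `|w1| <= v.
  by apply: ubv; exists y1, g1; split => //; rewrite v1 (ger0_norm (ltW v1p)).
have vpos : 0 < v by apply: lt_le_trans vge.
have vle1 : v <= 1 by apply: lubv => a [x [f [Pxf ->]]]; apply: bnd1 Pxf.
pose T := fun y => v^-1 *: T0 y.
have bT : bounded_op T.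
  split.
    by move=> a x y; rewrite /T lT0 scalerDr !scalerA mulrC.
  apply: (@lip_cont _ _ _ _ v^-1); first by rewrite invr_gt0.
  have iv0 : 0 <= v^-1 by rewrite invr_ge0 ltW.
  move=> u w; rewrite /T -scalerBr normrZ T0B (ger0_norm iv0).
  by apply: ler_wpM2l.
have gT : forall y g, Pi y g -> `|g (T y)| = v^-1 * `|g (T0 y)|.
  move=> y g [_ [[lg _] _]]; rewrite /T linfZ // normrM.
  by rewrite ger0_norm // invr_ge0 ltW.
have nT : num_radius T 1.
  split.
    move=> a [x [f [Pxf ->]]]; rewrite gT // ler_pdivrMl // mulr1.
    by apply: ubv; exists x, f.
  move=> b ub; have : v <= v * b.
    apply: lubv => a [x [f [Pxf ->]]].
    rewrite -ler_pdivrMl //; apply: ub; exists x, f; split => //.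
    by rewrite gT.
  by rewrite -ler_pdivrMl // mulVf ?gt_eqF.
have hx0 : 1 - eta < `|f0 (T x0)|.
  rewrite gT // gT0 // f0z mulr0 addr0 ger0_norm ?ltW //.
  apply: (@lt_le_trans _ _ (1 - e)); first by rewrite ltrD2l ltrN2.
  rewrite -[X in X <= _]mul1r; apply: ler_wpM2r; first exact: ltW.
  by rewrite invf_ge1.
have [y [g [Pyg [gTy [_ [cc [dnc ccd]]]]]]] := HBP T bT nT x0 f0 Px0 hx0.
have lg : is_linear_fun g by case: Pyg => _ [[]].
have lf0 : is_linear_fun f0 by case: Px0 => _ [[]].
have hZ : forall a x, (fun z => g z - f0 z) (a *: x) = a * (fun z => g z - f0 z) x.
  by move=> a x /=; rewrite !linfZ // mulrBr.
have gzc : `|g z| <= cc.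
  have := dual_bound hZ dnc z; by rewrite /= f0z subr0 nz mulr1.
have : v <= (1 - e) + e * cc.
  have := gT y g Pyg; rewrite gTy => H.
  have -> : v = `|g (T0 y)|.
    by rewrite -[LHS]mulr1 H mulrA mulfV ?gt_eqF // mul1r.
  apply: (le_trans (bnd _ _ Pyg)); rewrite lerD2l; apply: ler_wpM2l => //.
  exact: ltW.
have : (1 - e) + e * cc < v.
  apply: lt_le_trans vge; rewrite ltrD2l ltr_pM2l //.
  exact: lt_trans ccd dw.
by move=> /lt_le_trans H /H; rewrite ltxx.
Qed.


Lemma one_dim_BPB : one_dim X -> BPBop_nu X.
Proof.
move=> [e [e0 He]] eps eps0; exists 1; split => // T [lT _] nT x f Pxf _.
have [mu Tmu] := He (T e).
have Tm : forall y, T y = mu *: y.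
  move=> y; have [a ->] := He y; by rewrite linoZ // Tmu !scalerA mulrC.
have val : forall y g, Pi y g -> `|g (T y)| = `|mu|.
  move=> y g [_ [[lg _] [_ gy]]]; by rewrite Tm linfZ // gy mulr1.
have mu1 : `|mu| = 1.
  case: nT => ub lub; apply/eqP; rewrite eq_le; apply/andP; split.
    by apply: ub; exists x, f; rewrite val.
  by apply: lub => a [y [g [Pyg ->]]]; rewrite val.
exists x, f; split => //; split; first by rewrite val.
split; first by rewrite subrr normr0.
exists 0; split => //; split.
  by move=> a [y _ <-]; rewrite subrr normr0.
by move=> c; apply; exists 0; rewrite /= ?normr0 ?ler01 // subrr normr0.
Qed.

Lemma get_z (x0 : X) (f0 : X -> K) : ~ one_dim X -> `|x0| = 1 ->
  is_linear_fun f0 -> f0 x0 = 1 -> exists z, `|z| = 1 /\ f0 z = 0.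
Proof.
move=> nOD nx0 lf fx0.
have [w Hw] : exists w, forall a, w != a *: x0.
  apply: contrapT => H; apply: nOD; exists x0; split.
    by rewrite -normr_gt0 nx0 ltr01.
  move=> y; apply: contrapT => Hy; apply: H; exists y => a; apply/eqP => E.
  by apply: Hy; exists a.
set z' := w - f0 w *: x0.
have z'0 : z' != 0 by rewrite subr_eq0 Hw.
have nz' : 0 < `|z'| by rewrite normr_gt0.
exists (`|z'|^-1 *: z'); split.
  by rewrite normrZ normfV normr_id mulVf // gt_eqF.
by rewrite (linfZ lf) /z' (linfB lf) (linfZ lf) fx0 mulr1 subrr mulr0.
Qed.

Lemma case_index (Hs : sup_ex) (s : K) : BPBop_nu X -> ~ one_dim X ->
  num_index X s -> 0 < s -> False.
Proof.
move=> HB nOD [lb glb] s0.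
have [T [_ [_ [a nT]]]] : exists T : X -> X, bounded_op T /\ op_norm T 1 /\
    exists a, num_radius T a.
  apply: contrapT => H.
  have : s + 1 <= s.
    apply: glb => a [T [bT [oT nT]]]; case: H; exists T; split => //; split => //.
    by exists a.
  by rewrite gerDl ler10.
have [x0 [f0 Px0]] : exists (x : X) (f : X -> K), Pi x f.
  case: nT => _ lub; apply: contrapT => H.
  have : a <= a - 1.
    by apply: lub => b [x [f [Pxf _]]]; case: H; exists x, f.
  by rewrite lerDl oppr_ge0 ler10.
have lf0 : is_linear_fun f0 by case: Px0 => _ [[]].
have nx0 : `|x0| = 1 by case: Px0.
have fx0 : f0 x0 = 1 by case: Px0 => _ [_ []].
have [z [nz f0z]] := get_z nOD nx0 lf0 fx0.
pose P := fun y : X => 0 *: y + (1 * f0 y) *: z.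
have PE : forall y, P y = f0 y *: z by move=> y; rewrite /P scale0r add0r mul1r.
have bP : forall y, `|P y| <= `|y|.
  by move=> y; rewrite PE normrZ nz mulr1; apply: Pi_bound Px0 _.
have lP : is_linear_op P by apply: lin_comb_op.
have boP : bounded_op P.
  split => //; apply: (@lip_cont _ _ _ _ 1 ltr01) => u w.
  by rewrite mul1r -linoB //.
have oP : op_norm P 1.
  split.
    by move=> b [y /= ny <-]; apply: le_trans (bP y) ny.
  move=> c; apply; exists x0; first by rewrite /= nx0.
  by rewrite PE normrZ nz mulr1 fx0 normr1.
have gPb : forall y g, Pi y g -> `|g (P y)| <= 1.
  move=> y g Pyg; apply: le_trans (Pi_bound Pyg _) _.
  by apply: le_trans (bP y) _; case: Pyg => ->.
have [a' [ub' lub']] : exists a', num_radius P a'.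
  apply: Hs; first by exists `|f0 (P x0)|, x0, f0.
  by move=> b [y [g [Pyg ->]]]; rewrite normr_ge0 /=; apply: gPb Pyg.
have sa : s <= a'.
  apply: lb; exists P; split => //; split => //.
have s2 : 0 < s / 2 by rewrite divr_gt0.
have s2s : s / 2 < s by rewrite ltr_pdivrMr // ltr_pMr // ltr1n.
have [y1 [g1 [Py1 hw]]] : exists y g, Pi y g /\ s / 2 < `|g (P y)|.
  apply: contrapT => H.
  have : a' <= s / 2.
    apply: lub' => b [y [g [Pyg ->]]].
    rewrite real_leNgt ?normr_real ?ger0_real ?ltW //.
    by apply/negP => hb; apply: H; exists y, g.
  by move=> /(le_trans sa) H2; have := lt_le_trans s2s H2; rewrite ltxx.
have lg1 : is_linear_fun g1 by case: Py1 => _ [[]].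
rewrite PE (linfZ lg1) in hw.
apply: (contra_main Hs HB Px0 nz f0z lf0 _ Py1 s2 hw).
by move=> u; apply: Pi_bound Px0 _.
Qed.

Lemma case_fd (Hs : sup_ex)
  (HN : forall z : X, `|z| = 1 -> exists g, Pi z g) :
  BPBop_nu X -> ~ one_dim X -> (exists x : X, x != 0) -> False.
Proof.
move=> HB nOD [x x0].
have nx : 0 < `|x| by rewrite normr_gt0.
have nx0 : `| `|x|^-1 *: x| = 1 by rewrite normrZ normfV normr_id mulVf // gt_eqF.
have [f0 Px0] := HN _ nx0.
have lf0 : is_linear_fun f0 by case: Px0 => _ [[]].
have fx0 : f0 (`|x|^-1 *: x) = 1 by case: Px0 => _ [_ []].
have [z [nz f0z]] := get_z nOD nx0 lf0 fx0.
have [g1 Pz] := HN _ nz.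
have lg1 : is_linear_fun g1 by case: Pz => _ [[]].
have gz : g1 z = 1 by case: Pz => _ [_ []].
have h2 : (0 : K) < 1 / 2 by rewrite divr_gt0.
apply: (contra_main Hs HB Px0 nz f0z lg1 _ Pz h2).
  by move=> u; apply: Pi_bound Pz _.
by rewrite gz mulr1 normr1 ltr_pdivrMr // mul1r ltr1n.
Qed.

Lemma gen_main (Hs : sup_ex)
  (HN : finite_dim X -> forall z : X, `|z| = 1 -> exists g, Pi z g) :
  (exists x : X, x != 0) ->
  (num_index X 1
   \/ ((exists s : K, num_index X s /\ 0 < s) /\ approx_prop X)
   \/ finite_dim X) ->
  (BPBop_nu X <-> one_dim X).
Proof.
move=> hx hc; split; last exact: one_dim_BPB.
move=> HB; apply: contrapT => nOD.
case: hc => [h1|[[[s [hs s0]] _]|hfd]].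
- exact: (case_index Hs HB nOD h1 ltr01).
- exact: (case_index Hs HB nOD hs s0).
- exact: (case_fd Hs (HN hfd) HB nOD hx).
Qed.

End Gen.

Section RHB.
Variable R : realType.
Variable V : zmodType.
Variable sc : R -> V -> V.
Hypothesis scD : forall a x y, sc a (x + y) = sc a x + sc a y.
Hypothesis scDl : forall a b x, sc (a + b) x = sc a x + sc b x.
Hypothesis scA : forall a b x, sc a (sc b x) = sc (a * b) x.
Hypothesis sc1 : forall x, sc 1 x = x.

Lemma sc0 x : sc 0 x = 0.
Proof. by have := scDl 0 0 x; rewrite addr0 => /eqP; rewrite -subr_eq subrr eq_sym => /eqP. Qed.

Lemma scN a x : sc (- a) x = - sc a x.
Proof. by apply/eqP; rewrite -addr_eq0 -scDl addNr sc0. Qed.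

Lemma scx0 a : sc a 0 = 0.
Proof. by rewrite -(sc0 0) scA mulr0. Qed.

Lemma scNx a x : sc a (- x) = - sc a x.
Proof. by apply/eqP; rewrite -addr_eq0 -scD addNr scx0. Qed.

Definition subl (q : V -> R) :=
  (forall x y, q (x + y) <= q x + q y) /\
  (forall r x, 0 <= r -> q (sc r x) <= r * q x).

Section Subl.
Variable q : V -> R.
Hypothesis hq : subl q.

Lemma subl0 : q 0 = 0.
Proof.
case: hq => h1 h2; apply/eqP; rewrite eq_le; apply/andP; split.
  by have := h2 0 0 (lexx _); rewrite sc0 mul0r.
by have := h1 0 0; rewrite addr0 lerDr.
Qed.

Lemma sublZ r x : 0 <= r -> q (sc r x) = r * q x.
Proof.
case: hq => h1 h2 r0; apply/eqP; rewrite eq_le h2 //=.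
have [->|rn0] := eqVneq r 0; first by rewrite sc0 mul0r subl0.
have rp : 0 < r by rewrite lt_neqAle eq_sym rn0.
have ir : 0 <= r^-1 by rewrite invr_ge0.
have := h2 r^-1 (sc r x) ir.
by rewrite scA mulVf // sc1 ler_pdivlMl.
Qed.

Lemma sublN x : - q (- x) <= q x.
Proof. by case: hq => h1 _; have := h1 x (- x); rewrite subrr subl0 => H; rewrite -subr_ge0 opprK. Qed.
End Subl.

Definition lin (v : V) (q : V -> R) (x : V) : R :=
  inf [set q (x + sc t v) - t * q v | t in [set t : R | 0 <= t]].

Section Lin.
Variable q : V -> R.
Hypothesis hq : subl q.
Variable v : V.

Lemma lin_lb x : lbound [set q (x + sc t v) - t * q v | t in [set t : R | 0 <= t]] (- q (- x)).
Proof.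
move=> _ [t /= t0 <-]; rewrite lerBrDr.
have := (proj1 hq) (x + sc t v) (- x).
by rewrite addrAC subrr add0r sublZ // => H; rewrite addrC lerBlDr.
Qed.

Lemma lin_le x t : 0 <= t -> lin v q x <= q (x + sc t v) - t * q v.
Proof.
move=> t0; apply: ge_inf; first by exists (- q (- x)); apply: lin_lb.
by exists t.
Qed.

Lemma le_lin x m : (forall t, 0 <= t -> m <= q (x + sc t v) - t * q v) -> m <= lin v q x.
Proof.
move=> H; apply: lb_le_inf; first by exists (q (x + sc 0 v) - 0 * q v); exists 0 => /=.
by move=> _ [t /= t0 <-]; apply: H.
Qed.

Lemma lin_leq x : lin v q x <= q x.
Proof. by have := lin_le x (lexx 0); rewrite sc0 addr0 mul0r subr0. Qed.

Lemma lin_geN x : - q (- x) <= lin v q x.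
Proof. by apply: le_lin => t t0; apply: lin_lb; exists t. Qed.

Lemma lin0 : lin v q 0 = 0.
Proof.
apply/eqP; rewrite eq_le; apply/andP; split.
  by have := lin_leq 0; rewrite (subl0 hq).
by have := lin_geN 0; rewrite oppr0 (subl0 hq) oppr0.
Qed.

Lemma lin_subl : subl (lin v q).
Proof.
split.
  move=> x y.
  rewrite -lerBlDr; apply: le_lin => t t0.
  rewrite lerBlDr -lerBlDl; apply: le_lin => s s0.
  rewrite lerBlDl.
  apply: le_trans (lin_le (x + y) (addr_ge0 t0 s0)) _.
  rewrite scDl (addrACA x y) mulrDl [X in _ <= X]addrACA -opprD lerD2r.
  exact: (proj1 hq).
move=> r x r0.
have [->|rn0] := eqVneq r 0.
  by rewrite sc0 mul0r lin0.
have rp : 0 < r by rewrite lt_neqAle eq_sym rn0.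
rewrite -ler_pdivrMl //; apply: le_lin => t t0.
rewrite ler_pdivrMl //.
apply: le_trans (lin_le _ (mulr_ge0 r0 t0)) _.
by rewrite -scA -scD (sublZ hq) // mulrBr mulrA.
Qed.

Lemma lin_v : lin v q v = q v.
Proof.
apply/eqP; rewrite eq_le lin_leq /=.
have h1 : lin v q (- v) <= - q v.
  by have := lin_le (- v) ler01; rewrite sc1 addNr (subl0 hq) mul1r sub0r.
have h2 := (proj1 lin_subl) v (- v); rewrite subrr lin0 in h2.
have h3 : q v <= - lin v q (- v) by rewrite lerNr.
by apply: le_trans h3 _; rewrite -subr_ge0 opprK.
Qed.

Lemma lin_vN : lin v q (- v) = - q v.
Proof.
apply/eqP; rewrite eq_le; apply/andP; split.
  by have := lin_le (- v) ler01; rewrite sc1 addNr (subl0 hq) mul1r sub0r.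
have h2 := (proj1 lin_subl) v (- v); rewrite subrr lin0 lin_v in h2.
by rewrite -subr_ge0 opprK addrC.
Qed.

End Lin.

Definition along (q : V -> R) (u : V) := forall x a, q (x + sc a u) = q x + a * q u.

Lemma along_pos (q : V -> R) (hq : subl q) w : q (- w) = - q w ->
  forall x a, 0 <= a -> q (x + sc a w) = q x + a * q w.
Proof.
move=> hw x a a0; apply/eqP; rewrite eq_le; apply/andP; split.
  by apply: le_trans ((proj1 hq) _ _) _; rewrite (sublZ hq).
have := (proj1 hq) (x + sc a w) (sc a (- w)).
rewrite (sublZ hq) // hw mulrN scNx addrK => H.
by rewrite -lerBrDr.
Qed.

Lemma along_of (q : V -> R) (hq : subl q) u : q (- u) = - q u -> along q u.
Proof.
move=> hu x a.
have [a0|a0] := leP 0 a; first exact: along_pos.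
have -> : sc a u = sc (- a) (- u) by rewrite scNx scN opprK.
rewrite (along_pos hq) ?opprK ?hu ?mulrNN //; last by rewrite oppr_ge0 ltW.
by rewrite opprK.
Qed.

Lemma lin_along (q : V -> R) (hq : subl q) v : along (lin v q) v.
Proof. by apply: along_of; [exact: lin_subl | rewrite (lin_vN hq) (lin_v hq)]. Qed.

Lemma lin_key (q : V -> R) (hq : subl q) v u : along q u ->
  forall x a, lin v q (x + sc a u) = lin v q x + a * q u.
Proof.
move=> hu x a; apply/eqP; rewrite eq_le; apply/andP; split.
    rewrite -lerBlDr; apply: le_lin => // t t0; rewrite lerBlDr.
    apply: le_trans (lin_le hq v (x + sc a u) t0) _.
    by rewrite addrAC hu addrAC.
  apply: le_lin => // t t0; rewrite addrAC hu addrAC lerD2r.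
  exact: lin_le hq v x t t0.
Qed.

Lemma lin_pres (q : V -> R) (hq : subl q) v u : along q u -> along (lin v q) u.
Proof.
move=> hu; have key := lin_key hq v hu.
move=> x a; rewrite key; congr (_ + _ * _).
by have := key 0 1; rewrite add0r sc1 (lin0 hq) add0r mul1r.
Qed.

Fixpoint Qit (p : V -> R) (l : seq V) : V -> R :=
  if l is v :: l' then lin v (Qit p l') else p.

Lemma Qit_subl p l : subl p -> subl (Qit p l).
Proof. by move=> hp; elim: l => //= v l IH; apply: lin_subl. Qed.

Lemma Qit_le p l : subl p -> forall x, Qit p l x <= p x.
Proof.
move=> hp; elim: l => //= v l IH x.
by apply: le_trans (IH x); apply: lin_leq; apply: Qit_subl.
Qed.

Lemma Qit_along p l : subl p -> forall u, u \in l -> along (Qit p l) u.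
Proof.
move=> hp; elim: l => //= v l IH u; rewrite inE => /orP [/eqP ->|ul].
  by apply: lin_along; apply: Qit_subl.
by apply: lin_pres; [apply: Qit_subl | apply: IH].
Qed.

Lemma Qit_x0 p l x0 : subl p -> Qit p (l ++ [:: x0]) x0 = p x0.
Proof.
move=> hp; elim: l => /= [|v l IH]; first exact: lin_v.
have ha : along (Qit p (l ++ [:: x0])) x0.
  by apply: Qit_along => //; rewrite mem_cat mem_seq1 eqxx orbT.
have := lin_key (Qit_subl _ hp) v ha 0 1.
by rewrite add0r sc1 (lin0 (Qit_subl _ hp)) add0r mul1r IH.
Qed.

Lemma along_sum (q : V -> R) (c : R * V -> R) (r : seq (R * V)) :
  (forall pr, pr \in r -> along q pr.2) ->
  forall x, q (x + \sum_(pr <- r) sc (c pr) pr.2) = q x + \sum_(pr <- r) c pr * q pr.2.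
Proof.
elim: r => [|pr r IH] H x; first by rewrite !big_nil !addr0.
rewrite !big_cons.
have hpr : along q pr.2 by apply: H; rewrite inE eqxx.
rewrite addrCA addrC hpr IH; last by move=> pr' h; apply: H; rewrite inE h orbT.
by rewrite -addrA [X in _ + X]addrC.
Qed.

Lemma sc_sum a (c : R * V -> R) (r : seq (R * V)) :
  sc a (\sum_(pr <- r) sc (c pr) pr.2) = \sum_(pr <- r) sc (a * c pr) pr.2.
Proof.
elim: r => [|pr r IH]; first by rewrite !big_nil scx0.
by rewrite !big_cons scD IH scA.
Qed.

Lemma real_HB (p : V -> R) (l : seq V) (x0 : V) : subl p ->
  (forall y, exists r : seq (R * V), (forall pr, pr \in r -> pr.2 \in l) /\
     y = \sum_(pr <- r) sc pr.1 pr.2) ->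
  exists q : V -> R, (forall x y, q (x + y) = q x + q y) /\
    (forall a x, q (sc a x) = a * q x) /\ (forall x, q x <= p x) /\ q x0 = p x0.
Proof.
move=> hp hspan.
have hq := Qit_subl (l ++ [:: x0]) hp.
have hal : forall u, u \in l -> along (Qit p (l ++ [:: x0])) u.
  by move=> u ul; apply: Qit_along => //; rewrite mem_cat ul.
have sE : forall y, exists r : seq (R * V), (forall pr, pr \in r ->
     along (Qit p (l ++ [:: x0])) pr.2) /\ y = \sum_(pr <- r) sc pr.1 pr.2.
  move=> y; have [r [hr ->]] := hspan y; exists r; split => //.
  by move=> pr /hr; apply: hal.
exists (Qit p (l ++ [:: x0])); split; last split; last split.
- move=> x y; have [r [hr ->]] := sE y.
  rewrite (along_sum (fun pr => pr.1)) //.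
  have := along_sum (fun pr => pr.1) hr 0; rewrite add0r (subl0 hq) add0r.
  by move=> ->.
- move=> a x; have [r [hr ->]] := sE x.
  rewrite sc_sum.
  have := along_sum (fun pr => a * pr.1) hr 0; rewrite add0r (subl0 hq) add0r => ->.
  have := along_sum (fun pr => pr.1) hr 0; rewrite add0r (subl0 hq) add0r => ->.
  by rewrite mulr_sumr; apply: eq_bigr => pr _; rewrite mulrA.
- exact: Qit_le.
- exact: Qit_x0.
Qed.

End RHB.

Lemma mkPi (K : numFieldType) (X : normedModType K) (g : X -> K) (z : X) :
  is_linear_fun g -> (forall x, `|g x| <= `|x|) -> `|z| = 1 -> g z = 1 -> Pi z g.
Proof.
move=> lg bg nz gz; split => //; split.
  split => //; apply: (@lip_cont _ _ _ _ 1 ltr01) => u w.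
  by rewrite mul1r -linfB.
split => //; split.
  by move=> b [x /= nx <-]; apply: le_trans (bg x) nx.
by move=> c; apply; exists z; rewrite /= ?nz ?gz ?normr1.
Qed.

Local Open Scope complex_scope.
Section Concrete.
Variable R : realType.

Lemma supR : sup_ex R.
Proof.
move=> S [a Sa] hb; exists (sup S); split.
  move=> b Sb; apply: sup_upper_bound => //; split; first by exists a.
  by exists 1 => y /hb /andP [].
move=> c hc; apply: ge_sup; first by exists a.
exact: hc.
Qed.

Lemma supC : sup_ex R[i].
Proof.
move=> S [a Sa] hb.
set S' := [set complex.Re b | b in S].
have hS' : has_sup S'.
  split; first by exists (complex.Re a), a.
  exists 1 => _ [b Sb <-]; have /andP [_ h] := hb b Sb.
  by move: h; rewrite lecE => /andP [].
exists (sup S')%:C; split.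
  move=> b Sb; rewrite lecE; apply/andP; split.
    by have /andP [h _] := hb b Sb; rewrite (ger0_Im h).
  by apply: sup_upper_bound => //; exists b.
move=> c hc; have := hc a Sa; rewrite lecE => /andP [/eqP hi _].
have /andP [h0 _] := hb a Sa.
rewrite lecE; apply/andP; split; first by rewrite hi (ger0_Im h0).
apply: ge_sup; first by exists (complex.Re a), a.
by move=> _ [b Sb <-]; have := hc b Sb; rewrite lecE => /andP [].
Qed.

Lemma normingR (X : normedModType R) :
  finite_dim X -> forall z : X, `|z| = 1 -> exists g, Pi z g.
Proof.
move=> [s hs] z nz.
have hsub : subl (fun (a : R) (x : X) => a *: x) (fun x : X => `|x|).
  split; first exact: ler_normD.
  by move=> r x r0; rewrite normrZ ger0_norm.
have hsp : forall y : X, exists r : seq (R * X), (forall pr, pr \in r -> pr.2 \in s) /\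
    y = \sum_(pr <- r) pr.1 *: pr.2.
  move=> y; have [c ->] := hs y.
  exists [seq (c i, s`_i) | i <- index_enum 'I_(size s)]; split.
    by move=> pr /mapP [i _ ->] /=; apply: mem_nth.
  by rewrite big_map.
have [q [qD [qZ [qle qz]]]] := real_HB (@scalerDr _ _) (fun a b x => scalerDl x a b)
   (fun a b x => scalerA a b x) (@scale1r _ _) z hsub hsp.
exists q; apply: mkPi => //.
- by move=> a x y; rewrite qD qZ.
- move=> x; rewrite ler_norml qle andbT.
  have := qle (- x); rewrite normrN -scaleN1r qZ mulN1r.
  by rewrite lerNl.
- by rewrite qz nz.
Qed.


Lemma ReM (r : R) (w : R[i]) : complex.Re (r%:C * w) = r * complex.Re w.
Proof. by case: w => a b; rewrite /= mul0r subr0. Qed.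

Lemma ReD (a b : R[i]) : complex.Re (a + b) = complex.Re a + complex.Re b.
Proof. by case: a; case: b. Qed.

Lemma ImM (r : R) (w : R[i]) : complex.Im (r%:C * w) = r * complex.Im w.
Proof. by case: w => a b; rewrite /= mul0r addr0. Qed.

Lemma cdecomp (a : R[i]) : a = (complex.Re a)%:C + (complex.Im a)%:C * 'i.
Proof. by rewrite [LHS]complexE mulrC. Qed.

Lemma iiC : ('i * 'i : R[i]) = -1.
Proof. by apply/eqP; rewrite eq_complex /=; apply/andP; split; apply/eqP; ring. Qed.

Lemma normingC (X : normedModType R[i]) :
  finite_dim X -> forall z : X, `|z| = 1 -> exists g, Pi z g.
Proof.
move=> [s hs] z nz.
pose sc := fun (a : R) (x : X) => a%:C *: x.
have scD : forall a x y, sc a (x + y) = sc a x + sc a y by move=> *; rewrite /sc scalerDr.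
have scDl : forall a b x, sc (a + b) x = sc a x + sc b x.
  by move=> *; rewrite /sc rmorphD scalerDl.
have scA : forall a b x, sc a (sc b x) = sc (a * b) x.
  by move=> *; rewrite /sc scalerA rmorphM.
have sc1 : forall x, sc 1 x = x by move=> x; rewrite /sc rmorph1 scale1r.
pose p := fun x : X => complex.Re `|x|.
have hsub : subl sc p.
  split.
    move=> x y; have := ler_normD x y; rewrite lecE ReD => /andP [_ h]; exact: h.
  move=> r x r0; rewrite /p /sc normrZ ger0_norm ?ler0c // ReM.
  by [].
pose l := s ++ [seq 'i *: v | v <- s].
have hsp : forall y : X, exists r : seq (R * X), (forall pr, pr \in r -> pr.2 \in l) /\
    y = \sum_(pr <- r) sc pr.1 pr.2.
  move=> y; have [c ->] := hs y.
  exists ([seq (complex.Re (c i), s`_i) | i <- index_enum 'I_(size s)] ++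
          [seq (complex.Im (c i), 'i *: s`_i) | i <- index_enum 'I_(size s)]); split.
    move=> pr; rewrite mem_cat => /orP [] /mapP [i _ ->] /=; rewrite mem_cat.
      by rewrite mem_nth.
    by rewrite map_f ?orbT // mem_nth.
  rewrite big_cat !big_map /=.
  rewrite (eq_bigr (fun i => sc (complex.Re (c i)) s`_i + sc (complex.Im (c i)) ('i *: s`_i))).
    by rewrite big_split.
  by move=> i _; rewrite /sc scalerA -scalerDl -cdecomp.
have [q [qD [qZ [qle qz]]]] := real_HB scD scDl scA sc1 z hsub hsp.
pose g := fun x : X => (q x) +i* (- q ('i *: x)).
have dec : forall (a : R[i]) (x : X), a *: x = sc (complex.Re a) x + sc (complex.Im a) ('i *: x).
  by move=> a x; rewrite /sc scalerA -scalerDl -cdecomp.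
have ii : forall x : X, 'i *: ('i *: x) = - x by move=> x; rewrite scalerA iiC scaleN1r.
have qN : forall x, q (- x) = - q x.
  move=> x; have -> : - x = sc (-1) x by rewrite /sc rmorphN rmorph1 scaleN1r.
  by rewrite qZ mulN1r.
have gD : forall x y, g (x + y) = g x + g y.
  move=> x y; rewrite /g scalerDr !qD; apply/eqP; rewrite eq_complex /=.
  by apply/andP; split; apply/eqP; ring.
have gZ : forall a x, g (a *: x) = a * g x.
  move=> a x; rewrite /g (dec a x) scalerDr /sc !scalerA !(mulrC 'i) -!scalerA.
  rewrite -!/(sc _ _) !qD !qZ ii qN.
  case: a => a1 a2; apply/eqP; rewrite eq_complex /=.
  by apply/andP; split; apply/eqP; ring.
have lg : is_linear_fun g by move=> a x y; rewrite gD gZ.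
have Reg : forall x, complex.Re (g x) = q x by [].
have bg : forall x, `|g x| <= `|x|.
  move=> x; have [->|w0] := eqVneq (g x) 0; first by rewrite normr0.
  set w := g x in w0 *.
  set lam := `|w| / w.
  have nlam : `|lam| = 1 by rewrite normrM normfV normr_id mulfV // normr_eq0.
  have glam : g (lam *: x) = `|w| by rewrite gZ /lam mulfVK.
  rewrite lecE; apply/andP; split.
    by rewrite (ger0_Im (normr_ge0 _)) (ger0_Im (normr_ge0 _)).
  rewrite -glam Reg; apply: le_trans (qle _) _.
  by rewrite /p normrZ nlam mul1r.
exists g; apply: mkPi => //.
have hre : complex.Re (g z) = 1 by rewrite Reg qz /p nz.
have hb := bg z; rewrite nz in hb.
have him : complex.Im (g z) = 0.
  have h2 : `|g z| ^+ 2 <= 1.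
    by rewrite -(expr1n _ 2) lerXn2r // ?nnegrE ?normr_ge0 ?ler01.
  move: h2; rewrite -add_Re2_Im2 hre expr1n (_ : (1 : R[i]) = (1 : R)%:C) // lecR.
  rewrite gerDl => h; apply/eqP; rewrite -sqrf_eq0 eq_le h sqr_ge0.
  by [].
by apply/eqP; rewrite eq_complex hre him !eqxx.
Qed.

End Concrete.

Theorem theorem2p4 (R : realType) :
  (forall X : completeNormedModType R, theorem2p4_stmt X) /\
  (forall X : completeNormedModType R[i], theorem2p4_stmt X).
Proof.
split => X; rewrite /theorem2p4_stmt.
- exact: (gen_main (@supR R) (@normingR R X)).
- exact: (gen_main (@supC R) (@normingC R X)).
Qed.
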